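(* For integers $0\le l\le m$ let $$A_{l,m}:=l!\,m!\,2^{m+l}d_{l,m}=\frac{l!\,m!}{2^{m-l}}\sum_{k=l}^{m}2^{k}\binom{2m-2k}{m-k}\binom{m+k}{k}\binom{k}{l}.$$ Then $A_{l,m}$ is a positive integer and $$\nu_{2}(A_{l,m})=\nu_{2}\big((m+1-l)_{2l}\big)+l,$$ where $(x)_k=x(x+1)\cdots(x+k-1)$ for $k\ge1$ and $(x)_0=1$. In particular $\nu_2(A_{1,m})=\nu_2(m(m+1))+1$.
   Context: $d_{l,m}=2^{-2m}\sum_{k=l}^{m}2^{k}\binom{2m-2k}{m-k}\binom{m+k}{m}\binom{k}{l}$. For a nonzero rational $x$, $\nu_2(x)$ denotes its $2$-adic valuation (the exponent of $2$ in $x$). *)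

(* Defs.v *)
From HB Require Import structures.
From mathcomp Require Import all_boot all_order all_algebra.
Set Implicit Arguments. Unset Strict Implicit. Unset Printing Implicit Defensive.
Import Order.TTheory GRing.Theory Num.Theory.

Local Open Scope ring_scope.

Definition d_lm (l m : nat) : rat :=
  (2%:R ^- (2 * m)%N) *
  \sum_(l <= k < m.+1)
     ((2 ^ k * 'C(2 * m - 2 * k, m - k) * 'C(m + k, m) * 'C(k, l))%N)%:R.

Definition A_lm (l m : nat) : rat :=
  ((l`! * m`! * 2 ^ (m + l))%N)%:R * d_lm l m.

Definition rising (x k : nat) : nat := \prod_(i < k) (x + i)%N.

Definition nu2 (n : nat) : nat := logn 2 n.

(* Main.v *)
From Stdlib Require Import Arith ArithRing.
Require Import Defs.
From HB Require Import structures.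
From mathcomp Require Import all_boot all_order all_algebra.
Import Order.TTheory GRing.Theory Num.Theory.

Definition df (j : nat) : nat := \prod_(t < j) (2 * t + 1)%N.

Lemma df_odd j : odd (df j).
Proof.
elim: j => [|j IH]; first by rewrite /df big_ord0.
by rewrite /df big_ord_recr /= oddM IH oddD oddM.
Qed.

Lemma fact2 j : ((2 * j)`! = 2 ^ j * j`! * df j)%N.
Proof.
elim: j => [|j IH]; first by rewrite /df big_ord0.
have -> : (2 * j.+1 = (2 * j).+2)%N by rewrite mulnS add2n.
rewrite !factS IH expnS /df big_ord_recr /= -/(df j).
rewrite -!multE -!plusE. ring.
Qed.

Lemma bin2 j : ('C(2 * j, j) * j`! = 2 ^ j * df j)%N.
Proof.
have hj : (j <= 2 * j)%N by rewrite mul2n -addnn leq_addr.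
have := bin_fact hj.
have -> : (2 * j - j = j)%N by rewrite mul2n -addnn addnK.
rewrite fact2 mulnA [in RHS in _ = RHS]mulnAC => /eqP; rewrite eqn_pmul2r ?fact_gt0 //.
by move/eqP.
Qed.

Lemma rising_fact x k : (rising x.+1 k * x`! = (x + k)`!)%N.
Proof.
elim: k => [|k IH]; first by rewrite /rising big_ord0 mul1n addn0.
rewrite /rising big_ord_recr /= -/(rising x.+1 k).
rewrite addnS factS -IH.
rewrite -!multE -!plusE. ring.
Qed.

Lemma alg {cc jf dfj ckl lf iff kf cmk mf mkf ffi mlf P Nf cNi Nif pm pl pk pj : nat} :
  (cc * jf = pj * dfj -> ckl * (lf * iff)=kf -> cmk * (mf * kf)=mkf -> ffi * jf = mlf ->
  P * mlf = Nf -> cNi * (iff * Nf) = Nif -> Nif = mkf ->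
  lf * mf * (pm * pl) * (pk * cc * cmk * ckl) * (jf * iff)
   = (pm * pk * pj) * (pl * P * (dfj * cNi * ffi)) * (jf * iff))%N.
Proof.
move=> E1 E2 E3 E4 E5 E6 E7.
transitivity (pm * pl * pk * (cc * jf) * (ckl * (lf * iff)) * cmk * mf)%N.
  rewrite -!multE. ring.
rewrite E1 E2.
transitivity (pm * pl * pk * pj * dfj * (cmk * (mf * kf)))%N.
  rewrite -!multE. ring.
rewrite E3 -E7 -E6 -E5 -E4.
rewrite -!multE. ring.
Qed.

Lemma term_id l m i : (l <= m)%N -> (i <= m - l)%N ->
 (l`! * m`! * 2^(m+l) * (2 ^ (i+l) * 'C(2 * m - 2 * (i+l), m - (i+l)) * 'C(m + (i+l), m) * 'C(i+l, l))
 = 2^(2 * m) * (2^l * rising (m + 1 - l) (2 * l) * (df (m-l-i) * 'C(m+l+i, i) * (m-l)^_i)))%N.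
Proof.
move=> hlm hi.
have hk : (i + l <= m)%N by rewrite addnC -leq_subRL.
set k := (i + l)%N in hk *.
set j := (m - k)%N.
have ej : (m - l - i = j)%N by rewrite /j /k addnC subnDA.
have e2 : (2 * m - 2 * k = 2 * j)%N by rewrite /j mulnBr.
rewrite ej e2.
have p2 : (2^(2 * m) = 2^m * 2^k * 2^j)%N.
  by rewrite -!expnD -addnA /j subnKC // mul2n addnn.
rewrite p2 expnD.
apply/eqP; rewrite -(eqn_pmul2r (_ : 0 < j`! * i`!)%N); last by rewrite muln_gt0 !fact_gt0.
have E1 := bin2 j.
have E2 : ('C(k, l) * (l`! * i`!) = k`!)%N.
  by have := bin_fact (leq_addl i l : (l <= k)%N); rewrite /k addnK.
have E3 : ('C(m + k, m) * (m`! * k`!) = (m + k)`!)%N.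
  by have := bin_fact (leq_addr k m); rewrite addKn.
have E4 : ((m - l) ^_ i * j`! = (m - l)`!)%N.
  by have := ffact_fact hi; rewrite ej.
have E5 : (rising (m + 1 - l) (2 * l) * (m - l)`! = (m + l)`!)%N.
  have -> : (m + 1 - l = (m - l).+1)%N by rewrite addn1 subSn.
  rewrite rising_fact; congr (_ `!).
  by rewrite mul2n -addnn addnA subnK.
have E6 : ('C(m + l + i, i) * (i`! * (m + l)`!) = (m + l + i)`!)%N.
  by have := bin_fact (leq_addl (m + l) i); rewrite addnK.
have E7 : ((m + l + i)`! = (m + k)`!)%N by rewrite /k [(i + l)%N]addnC addnA.
apply/eqP; exact: (alg E1 E2 E3 E4 E5 E6 E7).
Qed.

Lemma S_odd n N : odd N = odd n ->
  odd (\sum_(i < n.+1) df (n - i) * 'C(N + i, i) * n^_i)%N.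
Proof.
move=> hN.
rewrite big_ord_recl /= oddD subn0 bin0 ffactn0 !muln1 df_odd.
have : (2 %| \sum_(i < n) df (n - lift ord0 i) * 'C(N + lift ord0 i, lift ord0 i) * n ^_ (lift ord0 i))%N.
  apply: dvdn_sum => i _.
  rewrite /= /bump /= add1n.
  move: (nat_of_ord i) => x; clear i; case: x => [|i'].
    rewrite ffactn1 addn1 bin1 -mulnA; apply: dvdn_mull.
    rewrite dvdn2 oddM /= hN; by case: (odd n).
  rewrite ffactnS ffactnS; apply: dvdn_mull; rewrite mulnA; apply: dvdn_mulr.
  case: n {hN} => [|n'] //=.
  rewrite dvdn2 oddM /=; by case: (odd n').
by rewrite dvdn2 => /negbTE ->.
Qed.

Lemma reidx (F : nat -> nat) l m : (l <= m)%N ->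
  (\sum_(l <= k < m.+1) F k = \sum_(i < (m-l).+1) F (i + l))%N.
Proof.
by move=> h; rewrite -{1}[l]add0n big_addn subSn // big_mkord.
Qed.

Lemma part1 (l m : nat) : (l <= m)%N ->
     exists n : nat, (0 < n)%N /\ A_lm l m = (n%:R : rat) /\
       nu2 n = (nu2 (rising (m + 1 - l) (2 * l)) + l)%N.
Proof.
move=> hlm.
set P := rising (m + 1 - l) (2 * l).
set S := (\sum_(i < (m-l).+1) df (m - l - i) * 'C(m + l + i, i) * (m-l)^_i)%N.
have So : odd S.
  apply: S_odd; rewrite oddD oddB //.
have Pp : (0 < P)%N.
  by apply: prodn_gt0 => i; rewrite addn_gt0 addn1 subSn.
exists (2 ^ l * P * S)%N; split; [|split].
- by rewrite !muln_gt0 expn_gt0 Pp (odd_gt0 So).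
- have H : (l`! * m`! * 2 ^ (m + l) *
     \sum_(l <= k < m.+1) (2 ^ k * 'C(2 * m - 2 * k, m - k) * 'C(m + k, m) * 'C(k, l))
     = 2 ^ (2 * m) * (2 ^ l * P * S))%N.
    rewrite big_distrr reidx // /S !big_distrr /=.
    apply: eq_bigr => i _; rewrite term_id //.
    by rewrite -ltnS.
  rewrite /A_lm /d_lm -natr_sum mulrCA -natrM H natrM natrX mulKf //.
  by rewrite expf_neq0 // pnatr_eq0.
- have Sp := odd_gt0 So.
  have L0 : logn 2 S = 0%N by apply: logn_coprime; rewrite coprime2n.
  rewrite /nu2 !lognM ?expn_gt0 ?muln_gt0 ?expn_gt0 ?Pp //.
  by rewrite pfactorK // L0 addn0 addnC.
Qed.

Theorem mainTheorem9 :
  (forall l m : nat, (l <= m)%N ->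
     exists n : nat, (0 < n)%N /\ A_lm l m = (n%:R : rat) /\
       nu2 n = (nu2 (rising (m + 1 - l) (2 * l)) + l)%N) /\
  (forall m : nat, (1 <= m)%N ->
     exists n : nat, (0 < n)%N /\ A_lm 1 m = (n%:R : rat) /\
       nu2 n = (nu2 (m * (m + 1)) + 1)%N).
Proof.
split; first exact: part1.
move=> m hm; have [n0 [h1 [h2 h3]]] := part1 1 m hm.
exists n0; split => //; split => //; rewrite h3.
congr (nu2 _ + _)%N.
rewrite /rising (_ : (2 * 1 = 2)%N) // !big_ord_recr big_ord0 /= addnK mul1n addn0.
by [].
Qed.
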